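(* Consider the one-dimensional compressible Euler equations for a perfect gas with ratio of specific heats $\gamma>1$, with conserved variables $\mathbf U=(\rho,\rho u,\rho E)^T$ and flux $\mathbf F(\mathbf U)=(\rho u,\ \rho u^2+p,\ \rho uE+pu)^T$, where $E=\frac{p}{(\gamma-1)\rho}+\frac{u^2}{2}$, restricted to states with $\rho>0,\ p>0$. Let cells $j$ of widths $\Delta x_j>0$ carry states $\mathbf U_j(t)$, and consider the semi-discrete finite-volume scheme $$\Delta x_j\frac{d\mathbf U_j}{dt}=-\big(\mathbf F_{j+\frac12}-\mathbf F_{j-\frac12}\big),$$ where the interface flux $\mathbf F_{j+\frac12}=(F^1,F^2,F^3)_{j+\frac12}$ is the ECKEP flux $$F^1_{j+\frac12}=\overline{F^1},\qquad F^2_{j+\frac12}=\overline{F^1}\,\overline{u}+\overline{p},\qquad F^3_{j+\frac12}=\overline{F^3}-\frac{\alpha_3}{2}\,\Delta V_3,$$ $$\frac{\alpha_3}{2}=\frac{\overline{F^1}\,\Delta V_1+(\overline{F^1}\,\overline{u}+\overline{p})\,\Delta V_2+\overline{F^3}\,\Delta V_3-\Delta\psi}{\Delta V_3\,\Delta V_3}.$$ Here, for any cell quantity $X$, $\overline{X}=\overline{X}_{j+\frac12}=\tfrac12(X_{j+1}+X_j)$ and $\Delta X=\Delta X_{j+\frac12}=X_{j+1}-X_j$; $F^1,F^3$ denote the first and third components of $\mathbf F(\mathbf U)$ evaluated at cell states; $\mathbf V=(V_1,V_2,V_3)$ is the entropy variable vector and $\psi$ the entropy flux potential defined in the context. Assume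 $\Delta V_3\neq 0$ at every interface. Then: (i) at every interface, $(\mathbf V_{j+1}-\mathbf V_j)\cdot\mathbf F_{j+\frac12}=\psi_{j+1}-\psi_j$; (ii) every solution of the semi-discrete scheme satisfies, for each $j$, $$\Delta x_j\frac{d\eta(\mathbf U_j)}{dt}+\zeta_{j+\frac12}-\zeta_{j-\frac12}=0,\qquad \zeta_{j+\frac12}=\overline{\mathbf V}_{j+\frac12}\cdot\mathbf F_{j+\frac12}-\overline{\psi}_{j+\frac12};$$ (iii) every solution of the semi-discrete scheme satisfies, for each $j$, $$\Delta x_j\frac{d}{dt}\Big(\frac{\rho_ju_j^2}{2}\Big)+K_{j+\frac12}-K_{j-\frac12}=-u_j\big(\overline{p}_{j+\frac12}-\overline{p}_{j-\frac12}\big),\qquad K_{j+\frac12}=\frac{u_{j+1}u_j}{2}\,F^1_{j+\frac12}.$$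
   Context: Specific entropy: $s=\ln(p/\rho^\gamma)$. Mathematical entropy: $\eta(\mathbf U)=-\frac{\rho s}{\gamma-1}$. Entropy variables: $\mathbf V=\frac{d\eta}{d\mathbf U}=\Big(\frac{\gamma-s}{\gamma-1}-\frac{\rho u^2}{2p},\ \frac{\rho u}{p},\ -\frac{\rho}{p}\Big)^T$. Entropy flux potential: $\psi=\mathbf V\cdot\mathbf F(\mathbf U)-\zeta(\mathbf U)=\rho u$, where $\zeta(\mathbf U)=-\frac{\rho us}{\gamma-1}$. Subscript $j$ denotes evaluation at the state $\mathbf U_j$. *)

(* Defs.v *)
From Stdlib Require Import Reals ZArith.
From Coquelicot Require Import Coquelicot.
Open Scope R_scope.

(* A cell state in conserved variables U = (rho, rho u, rho E). *)
Record state := mkState { c_rho : R ; c_mom : R ; c_ener : R }.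

Section Euler.
Variable g : R.

Definition vel (U : state) : R := c_mom U / c_rho U.
(* from E = p/((g-1) rho) + u^2/2 *)
Definition pres (U : state) : R :=
  (g - 1) * (c_ener U - c_rho U * vel U ^ 2 / 2).
Definition admissible (U : state) : Prop := 0 < c_rho U /\ 0 < pres U.

Definition sent (U : state) : R := ln (pres U / Rpower (c_rho U) g).
Definition eta (U : state) : R := - (c_rho U * sent U) / (g - 1).

Definition V1 (U : state) : R :=
  (g - sent U) / (g - 1) - c_rho U * vel U ^ 2 / (2 * pres U).
Definition V2 (U : state) : R := c_rho U * vel U / pres U.
Definition V3 (U : state) : R := - (c_rho U / pres U).
Definition psi (U : state) : R := c_rho U * vel U.

Definition F1 (U : state) : R := c_rho U * vel U.
Definition F2 (U : state) : R := c_rho U * vel U ^ 2 + pres U.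
Definition F3 (U : state) : R := vel U * c_ener U + pres U * vel U.

(* arithmetic mean and jump across an interface (UL = U_j, UR = U_{j+1}) *)
Definition avg (X : state -> R) (UL UR : state) : R := (X UR + X UL) / 2.
Definition jump (X : state -> R) (UL UR : state) : R := X UR - X UL.

Definition eckep1 (UL UR : state) : R := avg F1 UL UR.
Definition eckep2 (UL UR : state) : R :=
  avg F1 UL UR * avg vel UL UR + avg pres UL UR.
Definition alpha3_half (UL UR : state) : R :=
  (avg F1 UL UR * jump V1 UL UR
   + (avg F1 UL UR * avg vel UL UR + avg pres UL UR) * jump V2 UL UR
   + avg F3 UL UR * jump V3 UL UR - jump psi UL UR)
  / (jump V3 UL UR * jump V3 UL UR).
Definition eckep3 (UL UR : state) : R :=
  avg F3 UL UR - alpha3_half UL UR * jump V3 UL UR.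

Definition zeta_num (UL UR : state) : R :=
  avg V1 UL UR * eckep1 UL UR + avg V2 UL UR * eckep2 UL UR
  + avg V3 UL UR * eckep3 UL UR - avg psi UL UR.

Definition K_num (UL UR : state) : R := vel UR * vel UL / 2 * eckep1 UL UR.

Definition kin (U : state) : R := c_rho U * vel U ^ 2 / 2.

End Euler.

(* Main.v *)
Require Import Defs.
From Stdlib Require Import Reals ZArith Lra.
From Coquelicot Require Import Coquelicot.
Open Scope R_scope.

Lemma dmul (f h : R -> R) x df dh : is_derive f x df -> is_derive h x dh ->
  is_derive (fun s => f s * h s) x (df * h x + f x * dh).
Proof. intros A B. apply (is_derive_mult f h x df dh A B). intros; apply Rmult_comm. Qed.
Lemma dsub (f h : R -> R) x df dh : is_derive f x df -> is_derive h x dh ->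
  is_derive (fun s => f s - h s) x (df - dh).
Proof. intros A B. apply (is_derive_minus f h x df dh A B). Qed.
Lemma dopp (f : R -> R) x df : is_derive f x df -> is_derive (fun s => - f s) x (- df).
Proof. intros A. apply (is_derive_opp f x df A). Qed.
Lemma ddivc (f : R -> R) x df c : is_derive f x df -> is_derive (fun s => f s / c) x (df / c).
Proof. intros A. apply (is_derive_ext (fun s => /c * f s)); [intros s; cbv beta; unfold Rdiv; apply Rmult_comm|].
  replace (df / c) with (/c * df) by (unfold Rdiv; ring). now apply is_derive_scal. Qed.
Lemma dmulc (f : R -> R) x df c : is_derive f x df -> is_derive (fun s => c * f s) x (c * df).
Proof. apply is_derive_scal. Qed.
Lemma dcomp (f h : R -> R) x df dh : is_derive f (h x) df -> is_derive h x dh ->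
  is_derive (fun s => f (h s)) x (dh * df).
Proof. intros A B. apply (is_derive_comp f h x df dh A B). Qed.

Lemma eta_deriv (g : R) (W : R -> state) (t rd md ed : R) :
  is_derive (fun s => c_rho (W s)) t rd ->
  is_derive (fun s => c_mom (W s)) t md ->
  is_derive (fun s => c_ener (W s)) t ed ->
  0 < c_rho (W t) -> 0 < pres g (W t) -> 1 < g ->
  is_derive (fun s => eta g (W s)) t
    (V1 g (W t) * rd + V2 g (W t) * md + V3 g (W t) * ed).
Proof.
  intros Hr Hm He r0 p0 g1.
  assert (Hv := is_derive_div _ _ _ _ _ Hm Hr (Rgt_not_eq _ _ r0)).
  assert (Hv2 := is_derive_pow _ 2 _ _ Hv).
  assert (Hk := ddivc _ _ _ 2 (dmul _ _ _ _ _ Hr Hv2)).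
  assert (Hp := dmulc _ _ _ (g - 1) (dsub _ _ _ _ _ He Hk)).
  assert (HP : is_derive (fun s => Rpower (c_rho (W s)) g) t
     (rd * (g * Rpower (c_rho (W t)) (g - 1)))).
  { apply (dcomp (fun x => Rpower x g)); auto.
    apply is_derive_Reals. now apply derivable_pt_lim_power. }
  assert (P0 : Rpower (c_rho (W t)) g <> 0).
  { unfold Rpower. apply Rgt_not_eq, exp_pos. }
  assert (Hq := is_derive_div _ _ _ _ _ Hp HP P0).
  assert (q0 : 0 < pres g (W t) / Rpower (c_rho (W t)) g).
  { unfold Rdiv; apply Rmult_lt_0_compat; auto. apply Rinv_0_lt_compat. unfold Rpower; apply exp_pos. }
  assert (Hl := dcomp ln (fun s => pres g (W s) / Rpower (c_rho (W s)) g) _ _ _ (proj2 (is_derive_Reals _ _ _) (derivable_pt_lim_ln _ q0)) Hq).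
  assert (He2 := ddivc _ _ _ (g - 1) (dopp _ _ _ (dmul _ _ _ _ _ Hr Hl))).
  simpl in He2.
  match type of He2 with is_derive _ _ ?D => replace (V1 g (W t) * rd + V2 g (W t) * md + V3 g (W t) * ed) with D end.
  exact He2.
  assert (PX : Rpower (c_rho (W t)) g = Rpower (c_rho (W t)) (g - 1) * c_rho (W t)).
  { rewrite <- (Rpower_1 (c_rho (W t))) at 3 by auto. rewrite <- Rpower_plus. f_equal; ring. }
  assert (X0 : Rpower (c_rho (W t)) (g - 1) <> 0).
  { unfold Rpower. apply Rgt_not_eq, exp_pos. }
  unfold V1, V2, V3, sent.
  rewrite PX in *. 
  assert (Hmu : c_mom (W t) = vel (W t) * c_rho (W t)).
  { unfold vel. field. lra. }
  set (s := ln (pres g (W t) / (Rpower (c_rho (W t)) (g - 1) * c_rho (W t)))).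
  set (p := pres g (W t)) in *.
  set (X := Rpower (c_rho (W t)) (g - 1)) in *.
  set (u := vel (W t)).
  change (c_mom (W t) / c_rho (W t)) with u.
  rewrite Hmu.
  assert (Hp' : c_ener (W t) = p / (g - 1) + c_rho (W t) * u ^ 2 / 2).
  { unfold p, pres. fold u. field. lra. }
  rewrite Hp'. fold u. simpl. field. repeat split; lra || auto.
Qed.

Lemma part_i g UL UR : jump (V3 g) UL UR <> 0 ->
  jump (V1 g) UL UR * eckep1 UL UR + jump (V2 g) UL UR * eckep2 g UL UR
     + jump (V3 g) UL UR * eckep3 g UL UR = jump psi UL UR.
Proof.
  intros H. unfold eckep3, alpha3_half. unfold eckep1, eckep2. field. exact H.
Qed.

Lemma kin_deriv (W : R -> state) (t rd md : R) :
  is_derive (fun s => c_rho (W s)) t rd ->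
  is_derive (fun s => c_mom (W s)) t md ->
  0 < c_rho (W t) ->
  is_derive (fun s => kin (W s)) t (vel (W t) * md - vel (W t) ^ 2 / 2 * rd).
Proof.
  intros Hr Hm r0.
  assert (Hv := is_derive_div _ _ _ _ _ Hm Hr (Rgt_not_eq _ _ r0)).
  assert (Hv2 := is_derive_pow _ 2 _ _ Hv).
  assert (Hk := ddivc _ _ _ 2 (dmul _ _ _ _ _ Hr Hv2)).
  match type of Hk with is_derive _ _ ?D => replace (vel (W t) * md - vel (W t) ^ 2 / 2 * rd) with D end.
  exact Hk.
  unfold vel. simpl. field. lra.
Qed.

Theorem mainTheorem1
  (g : R) (dx : Z -> R) (U : Z -> R -> state) (a b : R) :
  1 < g ->
  (forall j : Z, 0 < dx j) ->
  (forall (j : Z) (t : R), a < t < b -> admissible g (U j t)) ->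
  (forall (j : Z) (t : R), a < t < b -> jump (V3 g) (U j t) (U (j + 1)%Z t) <> 0) ->
  (forall (j : Z) (t : R), a < t < b ->
     is_derive (fun s => c_rho (U j s)) t
       (- (eckep1 (U j t) (U (j + 1)%Z t) - eckep1 (U (j - 1)%Z t) (U j t)) / dx j)
  /\ is_derive (fun s => c_mom (U j s)) t
       (- (eckep2 g (U j t) (U (j + 1)%Z t) - eckep2 g (U (j - 1)%Z t) (U j t)) / dx j)
  /\ is_derive (fun s => c_ener (U j s)) t
       (- (eckep3 g (U j t) (U (j + 1)%Z t) - eckep3 g (U (j - 1)%Z t) (U j t)) / dx j)) ->
  (forall (j : Z) (t : R), a < t < b ->
     let UL := U j t in let UR := U (j + 1)%Z t in
     jump (V1 g) UL UR * eckep1 UL UR + jump (V2 g) UL UR * eckep2 g UL UR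
     + jump (V3 g) UL UR * eckep3 g UL UR = jump psi UL UR)
  /\
  (forall (j : Z) (t : R), a < t < b ->
     exists D : R, is_derive (fun s => eta g (U j s)) t D /\
       dx j * D + zeta_num g (U j t) (U (j + 1)%Z t)
                - zeta_num g (U (j - 1)%Z t) (U j t) = 0)
  /\
  (forall (j : Z) (t : R), a < t < b ->
     exists D : R, is_derive (fun s => kin (U j s)) t D /\
       dx j * D + K_num (U j t) (U (j + 1)%Z t) - K_num (U (j - 1)%Z t) (U j t)
       = - vel (U j t) * (avg (pres g) (U j t) (U (j + 1)%Z t)
                          - avg (pres g) (U (j - 1)%Z t) (U j t))).
Proof.
  intros g1 Hdx Had HV3 Hs.
  assert (Hi : forall (j : Z) (t : R), a < t < b ->
     let UL := U j t in let UR := U (j + 1)%Z t in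
     jump (V1 g) UL UR * eckep1 UL UR + jump (V2 g) UL UR * eckep2 g UL UR
     + jump (V3 g) UL UR * eckep3 g UL UR = jump psi UL UR).
  { intros j t Ht. simpl. apply part_i. now apply HV3. }
  split; [exact Hi|split].
  - intros j t Ht.
    destruct (Hs j t Ht) as [Hr [Hm He]].
    destruct (Had j t Ht) as [r0 p0].
    eexists. split. apply (eta_deriv g (U j) t _ _ _ Hr Hm He r0 p0 g1).
    assert (Hp := Hi j t Ht). assert (Hm1 := Hi (j - 1)%Z t Ht).
    simpl in Hp, Hm1. replace (j - 1 + 1)%Z with j in Hm1 by ring.
    assert (d0 := Hdx j).
    unfold zeta_num, avg, jump in *.
    set (A := eckep1 (U j t) (U (j + 1)%Z t)) in *.
    set (B := eckep2 g (U j t) (U (j + 1)%Z t)) in *.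
    set (C := eckep3 g (U j t) (U (j + 1)%Z t)) in *.
    set (A' := eckep1 (U (j-1)%Z t) (U j t)) in *.
    set (B' := eckep2 g (U (j-1)%Z t) (U j t)) in *.
    set (C' := eckep3 g (U (j-1)%Z t) (U j t)) in *.
    transitivity ((1/2) * ((V1 g (U (j + 1)%Z t) - V1 g (U j t)) * A + (V2 g (U (j + 1)%Z t) - V2 g (U j t)) * B + (V3 g (U (j + 1)%Z t) - V3 g (U j t)) * C - (psi (U (j + 1)%Z t) - psi (U j t)))
       + (1/2) * ((V1 g (U j t) - V1 g (U (j-1)%Z t)) * A' + (V2 g (U j t) - V2 g (U (j-1)%Z t)) * B' + (V3 g (U j t) - V3 g (U (j-1)%Z t)) * C' - (psi (U j t) - psi (U (j-1)%Z t)))).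
    + field. lra.
    + rewrite Hp, Hm1. ring.
  - intros j t Ht.
    destruct (Hs j t Ht) as [Hr [Hm He]].
    destruct (Had j t Ht) as [r0 p0].
    eexists. split. apply (kin_deriv (U j) t _ _ Hr Hm r0).
    assert (d0 := Hdx j).
    unfold K_num, eckep2, eckep1, avg. field. lra.
Qed.
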